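(* Let $p$ be an odd prime, let $v$ be an integer with $1<v<p-1$, and let $g\in\{2,\dots,p-1\}$ be a primitive root modulo $p$. Define the sequence $\gamma_v=(\gamma_v(i))_{i=1}^{p-1}$ by $\gamma_v(i)=\big(g^{i-1}\,\%\,p\big)\,\%\,v$. Then $\gamma_v$, regarded as a periodic sequence of length $p-1$, has least period exactly $p-1$.
   Context: For integers $x$ and $m\ge 1$, $x\,\%\,m$ denotes the least nonnegative remainder of $x$ upon division by $m$ (so $g^{i-1}\,\%\,p\in\{1,\dots,p-1\}$ is read as an ordinary integer before reducing modulo $v$). A sequence $s$ of length $N$ is regarded as indexed cyclically (indices modulo $N$); its least period is the smallest integer $\rho>0$ with $s(i+\rho)=s(i)$ for all indices $i$ (indices taken modulo $N$). *)

(* Defs.v *)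
From mathcomp Require Import all_boot.
Set Implicit Arguments. Unset Strict Implicit. Unset Printing Implicit Defensive.

Definition primitive_root_mod (p g : nat) : Prop :=
  coprime g p /\ g ^ (p.-1) = 1 %[mod p] /\
  (forall k, 0 < k < p.-1 -> g ^ k <> 1 %[mod p]).

(* gamma_v(i) = (g^(i-1) % p) % v, for i = 1..p-1. We index from 0:
   gamma_seq p g v j = gamma_v(j+1) = (g^j % p) % v, j = 0..p-2. *)
Definition gamma_seq (p g v : nat) (j : nat) : nat := (g ^ j %% p) %% v.

Definition is_cyc_period (N : nat) (s : nat -> nat) (rho : nat) : Prop :=
  0 < rho /\ forall i, i < N -> s ((i + rho) %% N) = s i.

Definition least_cyc_period (N : nat) (s : nat -> nat) (rho : nat) : Prop :=
  is_cyc_period N s rho /\ forall r, is_cyc_period N s r -> rho <= r.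

(* Main.v *)
Require Import Defs.
From mathcomp Require Import all_boot.
From mathcomp Require Import zify.

Lemma pow_inj (p g i j : nat) : prime p -> primitive_root_mod p g ->
  i < j -> j < p.-1 -> g ^ i %% p = g ^ j %% p -> False.
Proof.
move=> pp [cg [_ prim]] ij jN Heq.
have g0 : 0 < g.
  case: g cg {prim Heq} => // ; rewrite /coprime gcd0n => /eqP p1.
  by move: (prime_gt1 pp); rewrite p1.
have le : g ^ i <= g ^ j by apply: leq_pexp2l => //; apply: ltnW.
have : g ^ j == g ^ i %[mod p] by rewrite Heq.
rewrite eqn_mod_dvd // -(subnKC (ltnW ij)) expnD -{2}(muln1 (g ^ i)) -mulnBr.
rewrite Gauss_dvdr; last by rewrite coprime_sym coprimeXl.
rewrite -eqn_mod_dvd; last by rewrite expn_gt0 g0.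
move/eqP; apply: prim; apply/andP; split; first by rewrite subn_gt0.
apply: leq_ltn_trans jN; exact: leq_subr.
Qed.

Lemma pow_surj (p g x : nat) : prime p -> primitive_root_mod p g ->
  0 < x < p -> exists2 j, j < p.-1 & g ^ j %% p = x.
Proof.
move=> pp pr hx.
have [cg _] := pr.
set s := [seq g ^ j %% p | j <- iota 0 p.-1].
have Us : uniq s.
  rewrite map_inj_in_uniq ?iota_uniq // => i j.
  rewrite !mem_iota /= !add0n => Hi Hj Heq.
  case: (ltngtP i j) => // h.
  - by case: (pow_inj _ _ _ _ pp pr h Hj Heq).
  - by case: (pow_inj _ _ _ _ pp pr h Hi (esym Heq)).
have Sub : {subset s <= iota 1 p.-1}.
  move=> y /mapP [j _ ->]; rewrite mem_iota.
  have nd : ~~ (p %| g ^ j) by rewrite -prime_coprime // coprime_sym coprimeXl.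
  have := ltn_pmod (g ^ j) (prime_gt0 pp).
  move: nd; rewrite /dvdn. have := prime_gt1 pp. lia.
have sz : size (iota 1 p.-1) <= size s by rewrite size_map !size_iota.
have [_ E] := uniq_min_size Us Sub sz.
have : x \in s by rewrite E mem_iota; lia.
by case/mapP => j; rewrite mem_iota => /andP [_ Hj] ->; exists j.
Qed.

Lemma aux1 a p : a < 2 * p -> a - p < p.
Proof. lia. Qed.

Theorem theorem7 (p v g : nat) :
  prime p -> odd p -> 1 < v < p.-1 -> 2 <= g <= p.-1 ->
  primitive_root_mod p g ->
  least_cyc_period p.-1 (gamma_seq p g v) p.-1.
Proof.
move=> pp op hv hg pr.
have p1 := prime_gt1 pp.
have [cg [gN prim]] := pr.
split.
  split; first lia.
  by move=> i Hi; rewrite modnDr modn_small.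
move=> r [r0 Hr].
rewrite leqNgt; apply/negP => rN.
set H := g ^ r %% p.
have red : forall k, g ^ (k %% p.-1) %% p = g ^ k %% p.
  move=> k; rewrite {2}(divn_eq k p.-1) expnD (mulnC (k %/ p.-1)) expnM.
  rewrite -modnMm -(modnXm (k %/ p.-1)).
  have -> : g ^ p.-1 %% p = 1 by rewrite gN modn_small.
  by rewrite exp1n (modn_small p1) mul1n modn_mod.
have claim : forall x, 0 < x < p -> (x * H %% p) %% v = x %% v.
  move=> x hx; have [j Hj <-] := pow_surj _ _ _ pp pr hx.
  have := Hr j Hj; rewrite /gamma_seq red => <-.
  by rewrite /H modnMm expnD.
have Hp : H < p by rewrite /H ltn_mod; lia.
have H1 : H != 1.
  apply/eqP => e; apply: (prim r); first by rewrite r0 rN.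
  by rewrite -/H e modn_small.
have H0 : H != 0.
  have nd : ~~ (p %| g ^ r) by rewrite -prime_coprime // coprime_sym coprimeXl.
  by move: nd; rewrite /dvdn.
have Hv : H %% v = 1 %% v.
  by have := claim 1 p1; rewrite mul1n (modn_small Hp).
set x := p %/ H + 1.
have hx : 0 < x < p.
  have : p %/ H * 2 <= p.
    apply: leq_trans (leq_divM p H); rewrite leq_mul2l; lia.
  rewrite /x; lia.
have nd : ~~ (H %| p).
  apply/negP => hd; case/primeP: pp => _ /(_ H hd) /orP [] /eqP; move: H1 Hp; lia.
have H0' : 0 < H by rewrite lt0n.
have E1 : x * H < 2 * p.
  have := leq_divM p H.
  rewrite /x mulnDl mul1n. move: (p %/ H * H) => a. lia.
have E2 : p < x * H.
  have := ltn_pmod p H0'. have := divn_eq p H.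
  rewrite /x mulnDl mul1n. move: (p %/ H * H) (p %% H) => a b. lia.
have M1 : x * H %% p = x * H - p.
  rewrite -{1}(subnK (ltnW E2)) modnDr modn_small //.
  by apply: aux1.
have M2 : x * H %% v = x %% v.
  by rewrite -modnMm Hv modnMm muln1.
have := claim x hx; rewrite M1 -M2 => /esym /eqP.
rewrite eqn_mod_dvd ?leq_subr // subKn ?(ltnW E2) // => vp.
case/primeP: pp => _ /(_ v vp) /orP [] /eqP => e; move: hv; rewrite e.
  by [].
by case/andP => _; rewrite ltnNge leq_pred.
Qed.
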